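(* Let $\mathcal{X}\in\mathbb{IR}^n$, $\mathcal{U}\in\mathbb{IR}^m$ be boxes, $N\in\mathbb{N}$, and let $c:\mathcal{X}\times\mathcal{U}\times\mathcal{X}\to\mathbb{R}$ be Lipschitz with constant $L_c$ with respect to the Euclidean norm on $\mathbb{R}^{n}\times\mathbb{R}^m\times\mathbb{R}^n$. Let $x^j\in\mathcal{X}$ be the known current state, and for each $q$ let $\Phi_q(x,u)=x(t_{q+1};x,u)\in\mathcal{X}$ denote the (unknown) true state at $t_{q+1}$ reached from state $x$ at $t_q$ under constant control $u$. Let $\mathcal{R}^j_{\mathcal{U}}=\{x^j\}$ and let $\mathcal{R}^{q+1}_{\mathcal{U}}\in\mathbb{IR}^n$, $q=j,\dots,j+N$, be over-approximations of the reachable set at $t_{q+1}$ from $\mathcal{R}^q_{\mathcal{U}}$ under all controls in $\mathcal{U}$, in the sense that for every $x\in\mathcal{R}^q_{\mathcal{U}}$ and $u\in\mathcal{U}$ both the true successor $\Phi_q(x,u)$ and the model's predicted successor $\hat h_q(x,u)$ lie in $\mathcal{R}^{q+1}_{\mathcal{U}}$, where $\hat h_q:\mathcal{X}\times\mathcal{U}\to\mathcal{X}$ is the one-step predictor picked inside the data-driven over-approximation of the reachable set. Let $$C_j^\star=\inf_{u^j,\dots,u^{j+N}\in\mathcal{U}}\sum_{q=j}^{j+N}c(x^q,u^q,x^{q+1}),\quad x^{q+1}=\Phi_q(x^q,u^q),$$ $$\hat C_j=\inf_{u^j,\dots,u^{j+N}\in\mathcal{U}}\sum_{q=j}^{j+N}c(\hat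 x^q,u^q,\hat x^{q+1}),\quad \hat x^j=x^j,\ \hat x^{q+1}=\hat h_q(\hat x^q,u^q).$$ Then $$|C_j^\star-\hat C_j|\le L_c\Big(\|\mathrm{wd}(\mathcal{R}^{j+N+1}_{\mathcal{U}})\|_2+\sum_{q=j+1}^{j+N}2\,\|\mathrm{wd}(\mathcal{R}^q_{\mathcal{U}})\|_2\Big).$$
   Context: $\mathbb{IR}^n$ denotes $n$-dimensional interval vectors (boxes). For an interval vector $\mathcal{A}=[\underline{\mathcal{A}},\overline{\mathcal{A}}]$, $\mathrm{wd}(\mathcal{A})=\overline{\mathcal{A}}-\underline{\mathcal{A}}\in\mathbb{R}^n$ is its componentwise width and $\|\cdot\|_2$ the Euclidean norm. The underlying system is $\dot x=f(x)+\sum_{p=1}^dg_p(x)u[\alpha^p]$ with unknown $f,g_p$, sampled at times $t_q=t_j+(q-j)\Delta t$, with control held constant on each $[t_q,t_{q+1}]$; the sets $\mathcal{R}^{q+1}_{\mathcal{U}}$ are computed by the data-driven interval Taylor over-approximation formula applied to the initial set $\mathcal{R}^q_{\mathcal{U}}$ with the control value replaced by the box $\mathcal{U}$. *)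

(* Defs.v *)
From HB Require Import structures.
From mathcomp Require Import all_boot all_order all_algebra.
From mathcomp Require Import classical_sets reals.
Set Implicit Arguments. Unset Strict Implicit. Unset Printing Implicit Defensive.
Import Order.TTheory GRing.Theory Num.Theory.
Local Open Scope ring_scope.

Record box (R : realType) (n : nat) := Box { blo : 'rV[R]_n ; bhi : 'rV[R]_n }.

Definition box_wf (R : realType) n (B : box R n) : Prop :=
  forall i : 'I_n, blo B 0 i <= bhi B 0 i.

Definition inbox (R : realType) n (B : box R n) (x : 'rV[R]_n) : Prop :=
  forall i : 'I_n, blo B 0 i <= x 0 i <= bhi B 0 i.

Definition wd (R : realType) n (B : box R n) : 'rV[R]_n := bhi B - blo B.

Definition enorm (R : realType) n (v : 'rV[R]_n) : R :=
  Num.sqrt (\sum_(i < n) v 0 i ^+ 2).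

(* Lipschitz continuity of c on X x U x X, w.r.t. the Euclidean norm on
   R^n x R^m x R^n (= R^(n+m+n), via concatenation of the row vectors). *)
Definition lipschitz_on (R : realType) n m (X : box R n) (U : box R m)
  (c : 'rV[R]_n -> 'rV[R]_m -> 'rV[R]_n -> R) (Lc : R) : Prop :=
  forall x x' y y' u u', inbox X x -> inbox X x' -> inbox X y -> inbox X y' ->
    inbox U u -> inbox U u' ->
    `|c x u y - c x' u' y'| <=
      Lc * enorm (row_mx (row_mx (x - x') (u - u')) (y - y')).

(* trajectory under the step maps h q (from time t_q to t_{q+1}), starting at
   time j at state x0 with control sequence u; [traj h j x0 u k] is the state
   at time t_(j+k). *)
Fixpoint traj (R : realType) n m (h : nat -> 'rV[R]_n -> 'rV[R]_m -> 'rV[R]_n)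
  (j : nat) (x0 : 'rV[R]_n) (u : nat -> 'rV[R]_m) (k : nat) : 'rV[R]_n :=
  match k with
  | 0 => x0
  | k'.+1 => h (j + k')%N (traj h j x0 u k') (u (j + k')%N)
  end.

Definition cost (R : realType) n m (c : 'rV[R]_n -> 'rV[R]_m -> 'rV[R]_n -> R)
  (h : nat -> 'rV[R]_n -> 'rV[R]_m -> 'rV[R]_n) (j N : nat) (x0 : 'rV[R]_n)
  (u : nat -> 'rV[R]_m) : R :=
  \sum_(k < N.+1) c (traj h j x0 u k) (u (j + k)%N) (traj h j x0 u k.+1).

Definition admissible (R : realType) m (U : box R m) (j N : nat)
  (u : nat -> 'rV[R]_m) : Prop :=
  forall k, (k <= N)%N -> inbox U (u (j + k)%N).

Definition opt_cost (R : realType) n m (U : box R m)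
  (c : 'rV[R]_n -> 'rV[R]_m -> 'rV[R]_n -> R)
  (h : nat -> 'rV[R]_n -> 'rV[R]_m -> 'rV[R]_n) (j N : nat) (x0 : 'rV[R]_n) : R :=
  inf [set cost c h j N x0 u | u in [set u | admissible U j N u]]%classic.

(* Main.v *)
Require Import Defs.
From HB Require Import structures.
From mathcomp Require Import all_boot all_order all_algebra.
From mathcomp Require Import classical_sets reals.
From mathcomp Require Import lra zify.
Import Order.TTheory GRing.Theory Num.Theory.
Local Open Scope ring_scope.

Section Helpers.
Variable R : realType.

Lemma enorm_ge0 n (v : 'rV[R]_n) : 0 <= enorm v.
Proof. exact: sqrtr_ge0. Qed.

Lemma sumsq_ge0 n (v : 'rV[R]_n) : 0 <= \sum_(i < n) v 0 i ^+ 2.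
Proof. by apply: sumr_ge0 => i _; exact: sqr_ge0. Qed.

Lemma enorm_row_mx n1 n2 (a : 'rV[R]_n1) (b : 'rV[R]_n2) :
  enorm (row_mx a b) <= enorm a + enorm b.
Proof.
rewrite /enorm big_split_ord /=.
under eq_bigr => i _ do rewrite row_mxEl.
under [X in _ + X]eq_bigr => i _ do rewrite row_mxEr.
set sa := \sum_(i < n1) _. set sb := \sum_(i < n2) _.
have ha : 0 <= sa by exact: sumsq_ge0.
have hb : 0 <= sb by exact: sumsq_ge0.
have hA := sqrtr_ge0 sa. have hB := sqrtr_ge0 sb.
rewrite -(ger0_norm (addr_ge0 hA hB)) -sqrtr_sqr ler_sqrt; last exact: sqr_ge0.
rewrite sqrrD !sqr_sqrtr //.
have := mulr_ge0 hA hB. lra.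
Qed.

Lemma enorm_mono n (a b : 'rV[R]_n) :
  (forall i, `|a 0 i| <= b 0 i) -> enorm a <= enorm b.
Proof.
move=> H; rewrite /enorm ler_sqrt; last exact: sumsq_ge0.
apply: ler_sum => i _.
have := H i; rewrite ler_norml => /andP[h1 h2].
nra.
Qed.

Lemma enorm0 n : enorm (0 : 'rV[R]_n) = 0.
Proof.
rewrite /enorm big1 ?sqrtr0 // => i _; rewrite mxE; exact: expr0n.
Qed.

Lemma inbox_diff n (B : box R n) x y :
  inbox B x -> inbox B y -> forall i, `|(x - y) 0 i| <= wd B 0 i.
Proof.
move=> hx hy i; have := hx i; have := hy i; rewrite !mxE.
move=> /andP[h1 h2] /andP[h3 h4]; rewrite ler_norml; apply/andP; split; lra.
Qed.

Lemma inf_close (T : Type) (P : set T) (f g : T -> R) (K : R) :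
  (exists t, P t) ->
  (exists M, forall t, P t -> M <= f t) ->
  (exists M, forall t, P t -> M <= g t) ->
  (forall t, P t -> `|f t - g t| <= K) ->
  `| inf [set f t | t in P]%classic - inf [set g t | t in P]%classic | <= K.
Proof.
move=> [t0 Pt0] [Mf hf] [Mg hg] hK.
have lbf : has_lbound [set f t | t in P]%classic.
  by exists Mf => _ [t Pt <-]; exact: hf.
have lbg : has_lbound [set g t | t in P]%classic.
  by exists Mg => _ [t Pt <-]; exact: hg.
have nef : ([set f t | t in P]%classic !=set0)%classic by exists (f t0), t0.
have neg : ([set g t | t in P]%classic !=set0)%classic by exists (g t0), t0.
rewrite ler_distl; apply/andP; split.
- apply: lb_le_inf => // _ [t Pt <-].
  have := hK t Pt; rewrite ler_distl => /andP[h1 h2].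
  have : inf [set g t | t in P]%classic <= g t by apply: ge_inf => //; exists t.
  lra.
- rewrite -lerBlDr; apply: lb_le_inf => // _ [t Pt <-].
  have := hK t Pt; rewrite ler_distl => /andP[h1 h2].
  have : inf [set f t | t in P]%classic <= f t by apply: ge_inf => //; exists t.
  lra.
Qed.

End Helpers.

Theorem theorem3 (R : realType) (n m N j : nat) (X : box R n) (U : box R m)
  (c : 'rV[R]_n -> 'rV[R]_m -> 'rV[R]_n -> R) (Lc : R)
  (Phi hhat : nat -> 'rV[R]_n -> 'rV[R]_m -> 'rV[R]_n)
  (Rset : nat -> box R n) (xj : 'rV[R]_n) :
  box_wf X -> box_wf U ->
  0 <= Lc -> lipschitz_on X U c Lc ->
  inbox X xj ->
  (* true dynamics and one-step predictor map X x U into X *)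
  (forall q x u, inbox X x -> inbox U u -> inbox X (Phi q x u)) ->
  (forall q x u, inbox X x -> inbox U u -> inbox X (hhat q x u)) ->
  (* R^{q}_U, q = j+1..j+N+1, are boxes in IR^n *)
  (forall q, (j < q <= j + N.+1)%N -> box_wf (Rset q)) ->
  (* over-approximation from R^j_U = {x^j} *)
  (forall u, inbox U u ->
     inbox (Rset j.+1) (Phi j xj u) /\ inbox (Rset j.+1) (hhat j xj u)) ->
  (* over-approximation from R^q_U, q = j+1..j+N *)
  (forall q x u, (j < q <= j + N)%N -> inbox (Rset q) x -> inbox U u ->
     inbox (Rset q.+1) (Phi q x u) /\ inbox (Rset q.+1) (hhat q x u)) ->
  `| opt_cost U c Phi j N xj - opt_cost U c hhat j N xj | <=
    Lc * (enorm (wd (Rset (j + N).+1))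
          + \sum_(j.+1 <= q < (j + N).+1) 2 * enorm (wd (Rset q))).
Proof.
move=> wfX wfU Lc0 lip xjX PhiX hX wfR ovj ovq.
have loX : inbox X (blo X) by move=> i; rewrite lexx wfX.
have loU : inbox U (blo U) by move=> i; rewrite lexx wfU.
have trajX : forall h, (forall q x u, inbox X x -> inbox U u -> inbox X (h q x u)) ->
    forall u, admissible U j N u -> forall k, (k <= N.+1)%N ->
    inbox X (traj h j xj u k).
  move=> h hh u adm; elim=> [|k IH] hk //=.
  apply: hh; first by apply: IH; exact: ltnW.
  exact: adm.
set M := c (blo X) (blo U) (blo X)
   - Lc * (enorm (wd X) + enorm (wd U) + enorm (wd X)).
have cM : forall x u y, inbox X x -> inbox U u -> inbox X y -> M <= c x u y.
  move=> x u y hx hu hy.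
  have := lip _ _ _ _ _ _ hx loX hy loX hu loU.
  rewrite ler_distl => /andP[h1 _].
  have h2 : enorm (row_mx (row_mx (x - blo X) (u - blo U)) (y - blo X)) <=
     enorm (wd X) + enorm (wd U) + enorm (wd X).
    apply: le_trans; first apply: enorm_row_mx. apply: lerD; last first.
      by apply: enorm_mono; exact: inbox_diff.
    apply: le_trans; first apply: enorm_row_mx. apply: lerD;
      by apply: enorm_mono; exact: inbox_diff.
  have := ler_wpM2l Lc0 h2. rewrite /M. lra.
have costLB : forall h, (forall q x u, inbox X x -> inbox U u -> inbox X (h q x u)) ->
    exists M0, forall u, admissible U j N u -> M0 <= cost c h j N xj u.
  move=> h hh; exists (\sum_(k < N.+1) M) => u adm.
  apply: ler_sum => k _; apply: cM.
  - by apply: trajX => //; apply: ltnW; exact: ltn_ord.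
  - by apply: adm; rewrite -ltnS; exact: ltn_ord.
  - by apply: trajX => //; exact: ltn_ord.
apply: inf_close.
- by exists (fun _ => blo U) => k _.
- exact: costLB.
- exact: costLB.
move=> u adm.
pose a k := traj Phi j xj u k.
pose b k := traj hhat j xj u k.
pose e k := enorm (a k - b k).
pose w k := enorm (wd (Rset (j + k)%N)).
have inR : forall k, (0 < k <= N.+1)%N ->
    inbox (Rset (j + k)%N) (a k) /\ inbox (Rset (j + k)%N) (b k).
  elim=> [|k IH] //= hk.
  case: k IH hk => [|k] IH hk.
    by rewrite /a /b /= !addn0 addn1; apply: ovj; rewrite -(addn0 j); apply: adm.
  have [ha hb] := IH (ltnW hk).
  have hq : (j < j + k.+1 <= j + N)%N.
    lia.
  have hu : inbox U (u (j + k.+1)%N) by apply: adm; rewrite -ltnS.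
  rewrite addnS; split.
  - exact: (ovq _ _ _ hq ha hu).1.
  - exact: (ovq _ _ _ hq hb hu).2.
have ew : forall k, (0 < k <= N.+1)%N -> e k <= w k.
  move=> k hk; have [ha hb] := inR k hk.
  by apply: enorm_mono; exact: inbox_diff.
have e0 : e 0%N = 0 by rewrite /e /a /b /= subrr enorm0.
have step : forall k : 'I_N.+1,
   `|c (a k) (u (j + k)%N) (a k.+1) - c (b k) (u (j + k)%N) (b k.+1)|
     <= Lc * (e k + e k.+1).
  move=> k.
  have hk1 : (k <= N.+1)%N by apply: ltnW; exact: ltn_ord.
  have hk2 : (k.+1 <= N.+1)%N by exact: ltn_ord.
  have hu : inbox U (u (j + k)%N) by apply: adm; rewrite -ltnS; exact: ltn_ord.
  apply: le_trans.
    apply: lip => //; try exact: hu; by apply: trajX.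
  apply: ler_wpM2l => //.
  apply: le_trans; first apply: enorm_row_mx.
  apply: lerD => //.
  apply: le_trans; first apply: enorm_row_mx.
  by rewrite subrr enorm0 addr0.
have hsum : \sum_(j.+1 <= q < (j + N).+1) 2 * enorm (wd (Rset q))
    = \sum_(i < N) 2 * w i.+1.
  rewrite -{1}[j.+1]add0n big_addn subSS addKn big_mkord.
  by apply: eq_bigr => i _; rewrite /w; congr (_ * enorm (wd (Rset _))); lia.
rewrite /cost -sumrB hsum -addnS.
apply: le_trans; first apply: ler_norm_sum.
apply: le_trans; first (apply: ler_sum => k _; exact: step k).
rewrite -mulr_sumr; apply: ler_wpM2l => //.
rewrite big_split /= big_ord_recl big_ord_recr /= e0 add0r -mulr_sumr.
have h1 : \sum_(i < N) e (bump 0 i) <= \sum_(i < N) w i.+1.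
  apply: ler_sum => i _; apply: ew; rewrite /bump /=.
  by rewrite add1n ltnS; apply: ltnW; exact: ltn_ord.
have h2 : \sum_(i < N) e i.+1 <= \sum_(i < N) w i.+1.
  apply: ler_sum => i _; apply: ew => /=.
  by rewrite ltnS; apply: ltnW; exact: ltn_ord.
have h3 : e N.+1 <= enorm (wd (Rset (j + N.+1)%N)) by apply: ew; rewrite /= leqnn.
lra.
Qed.
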